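(* Let $Q$ be a quadrilateral in $K^2$. Two distinct bisectors of $Q$ share the same midpoint if and only if the vertices of $Q$ are the vertices of a parallelogram. In this case, the shared midpoint is the centroid of $Q$.
   Context: $K$ is a field of characteristic $\neq 2$; we work in $K^2$ inside the projective plane. A quadrilateral $Q=ABA'B'$ consists of four distinct lines $A,B,A',B'$ (sides), not all through one point, with adjacent sides ($A,B$; $B,A'$; $A',B'$; $B',A$) not parallel; opposite sides may be parallel. Vertices: $A\cap B$, $B\cap A'$, $A'\cap B'$, $B'\cap A$ (two may coincide if three sides are concurrent). The centroid is the midpoint of the midpoints of the diagonals (the lines through nonadjacent vertices), equivalently the average of the four vertices. A parallelogram is a quadrilateral whose pairs of opposite sides are parallel. A line $\ell$ crosses a pair $\{\ell_1,\ell_2\}$ if it is distinct from both and not parallel to both; $\mathrm{mid}_{\{\ell_1,\ell_2\}}(\ell)$ is the midpoint of the points where $\ell$ meets $\ell_1,\ell_2$ (the point at infinity of $\ell$ if one of them is at infinity). $\ell$ bisects $Q$ (is a bisector) if $\mathrm{mid}_{\mathsf P}(\ell)$ is the same for all pairs $\mathsf P$ among $\{A,A'\},\{B,B'\}$ that $\ell$ crosses; this common point is the midpoint of the bisector. *)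

(* Defs.v *)
From mathcomp Require Import all_boot all_algebra.
Set Implicit Arguments. Unset Strict Implicit. Unset Printing Implicit Defensive.
Import GRing.Theory.
Local Open Scope ring_scope.

Section Geometry.
Variable K : fieldType.

Definition point := (K * K)%type.

(* Directions of lines (= points at infinity): slope m, or vertical. *)
Inductive dir := DSlope of K | DVert.

(* A line in K^2, in canonical form: y = m x + c  (DSlope m)  or  x = c (DVert).
   This representation is bijective, so Leibniz equality = equality of lines. *)
Record line := Line { ldir : dir; lcst : K }.

Definition on (l : line) (p : point) : Prop :=
  match ldir l with
  | DSlope m => p.2 = m * p.1 + lcst l
  | DVert => p.1 = lcst l
  end.

(* Parallel = same direction (equal lines are parallel). *)
Definition parallel (l m : line) : Prop := ldir l = ldir m.

Inductive ppoint := Aff of point | Inf of dir.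

Definition midpt (p q : point) : point := ((p.1 + q.1) / 2, (p.2 + q.2) / 2).

(* X = mid_{l1,l2}(l): midpoint of l ∩ l1 and l ∩ l2, or the point at
   infinity of l if one of these intersections is at infinity. *)
Definition mid_is (l l1 l2 : line) (X : ppoint) : Prop :=
  ((parallel l l1 \/ parallel l l2) /\ X = Inf (ldir l)) \/
  (~ parallel l l1 /\ ~ parallel l l2 /\
   exists p q, [/\ on l p, on l1 p, on l q, on l2 q & X = Aff (midpt p q)]).

Definition crosses (l l1 l2 : line) : Prop :=
  [/\ l <> l1, l <> l2 & ~ (parallel l l1 /\ parallel l l2)].

(* A quadrilateral Q = A B A' B' (sides). *)
Record quad := Quad { qA : line; qB : line; qA' : line; qB' : line }.

Definition is_quad (Q : quad) : Prop :=
  let: Quad A B A' B' := Q in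
  [/\ [/\ A <> B, A <> A', A <> B', B <> A' & (B <> B' /\ A' <> B')],
      ~ (exists p, [/\ on A p, on B p, on A' p & on B' p]) &
      [/\ ~ parallel A B, ~ parallel B A', ~ parallel A' B' & ~ parallel B' A]].

Definition is_parallelogram (P : quad) : Prop :=
  is_quad P /\ parallel (qA P) (qA' P) /\ parallel (qB P) (qB' P).

Definition is_vertex (Q : quad) (x : point) : Prop :=
  let: Quad A B A' B' := Q in
  (on A x /\ on B x) \/ (on B x /\ on A' x) \/
  (on A' x /\ on B' x) \/ (on B' x /\ on A x).

Definition vertices_of_parallelogram (Q : quad) : Prop :=
  exists P, is_parallelogram P /\ forall x, is_vertex Q x <-> is_vertex P x.

Definition centroid (Q : quad) (c : point) : Prop :=
  let: Quad A B A' B' := Q in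
  exists v1 v2 v3 v4,
    [/\ on A v1 /\ on B v1, on B v2 /\ on A' v2, on A' v3 /\ on B' v3,
        on B' v4 /\ on A v4 & c = midpt (midpt v1 v3) (midpt v2 v4)].

Definition bisector_mid (Q : quad) (l : line) (X : ppoint) : Prop :=
  (crosses l (qA Q) (qA' Q) \/ crosses l (qB Q) (qB' Q)) /\
  (crosses l (qA Q) (qA' Q) -> mid_is l (qA Q) (qA' Q) X) /\
  (crosses l (qB Q) (qB' Q) -> mid_is l (qB Q) (qB' Q) X).

End Geometry.

(* Main.v *)
Require Import Defs.
From mathcomp Require Import all_boot all_algebra ring.
From Stdlib Require Import Classical.
Set Implicit Arguments. Unset Strict Implicit. Unset Printing Implicit Defensive.
Import GRing.Theory.
Local Open Scope ring_scope.

Section L.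
Variable K : fieldType.
Hypothesis char2 : (2:K) != 0.
Local Notation line := (line K).
Local Notation point := (point K).
Local Notation par := (@parallel K).

Definition n1 (l : line) : K := match ldir l with DSlope m => - m | DVert => 1 end.
Definition n2 (l : line) : K := match ldir l with DSlope _ => 1 | DVert => 0 end.
Definition ev (l : line) (p : point) : K := n1 l * p.1 + n2 l * p.2 - lcst l.
Definition det (l m : line) : K := n1 l * n2 m - n2 l * n1 m.
Definition refl (c p : point) : point := (2 * c.1 - p.1, 2 * c.2 - p.2).

Lemma pteq (p q : point) : p.1 = q.1 -> p.2 = q.2 -> p = q.
Proof. by case: p q => [a b] [c d] /= -> ->. Qed.

Lemma onE (l : line) (p : point) : on l p <-> ev l p = 0.
Proof.
rewrite /on /ev /n1 /n2; case: (ldir l) => [m|]; split => H.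
- by rewrite H; ring.
- by apply/eqP; rewrite -subr_eq0; apply/eqP; rewrite -H; ring.
- by rewrite H; ring.
- by apply/eqP; rewrite -subr_eq0; apply/eqP; rewrite -H; ring.
Qed.

Lemma par_iff l m : par l m <-> det l m = 0.
Proof.
rewrite /parallel /det /n1 /n2; case: (ldir l) => [a|]; case: (ldir m) => [b|]; split => //.
- by case => ->; ring.
- move=> /eqP; rewrite mulr1 mul1r opprK addrC subr_eq0 => /eqP ->; done.
- move=> /eqP; rewrite mulr0 mul1r sub0r oppr_eq0 oner_eq0 //.
- move=> /eqP; rewrite mul1r mul0r subr0 oner_eq0 //.
- move=> _; ring.
Qed.

Lemma par_refl l : par l l. Proof. by []. Qed.
Lemma par_sym l m : par l m -> par m l. Proof. by rewrite /parallel => ->. Qed.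
Lemma par_trans l m k : par l m -> par m k -> par l k. Proof. by rewrite /parallel => ->. Qed.
Lemma npar_sym l m : ~ par l m -> ~ par m l. Proof. by move=> h /par_sym. Qed.
Lemma npar_neq l m : ~ par l m -> l <> m. Proof. by move=> h e; apply: h; rewrite e. Qed.

Lemma nrm_par l m : par l m -> n1 l = n1 m /\ n2 l = n2 m.
Proof. by rewrite /parallel /n1 /n2 => ->. Qed.

Lemma nrm_nz l e : e * n1 l = 0 -> e * n2 l = 0 -> e = 0.
Proof. by rewrite /n1 /n2; case: (ldir l) => [m|] h1 h2; [move: h2|move: h1]; rewrite mulr1. Qed.

Lemma line_ext l m : par l m -> lcst l = lcst m -> l = m.
Proof. by case: l m => [d c] [d' c'] /=; rewrite /parallel /= => -> ->. Qed.

Lemma par_ev (l m : line) (p : point) : par l m -> ev m p = ev l p + (lcst l - lcst m).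
Proof. move=> /nrm_par [e1 e2]; rewrite /ev e1 e2; ring. Qed.

Lemma par_common (l m : line) (p : point) : par l m -> on l p -> on m p -> l = m.
Proof.
move=> h /onE hl /onE hm; apply: line_ext => //.
move: hm; rewrite (par_ev p h) hl add0r => /eqP; rewrite subr_eq0 => /eqP //.
Qed.

Lemma par_disj (l m : line) (p : point) : par l m -> l <> m -> on l p -> on m p -> False.
Proof. by move=> h hne hl hm; apply: hne; apply: par_common hl hm. Qed.

Lemma det_self l : det l l = 0. Proof. rewrite /det; ring. Qed.

Lemma inter l m : ~ par l m -> exists p, on l p /\ on m p.
Proof.
move=> /par_iff /eqP hd.
exists ((lcst l * n2 m - lcst m * n2 l) / det l m, (n1 l * lcst m - n1 m * lcst l) / det l m).
split; apply/onE; rewrite /ev /=; move: hd; rewrite /det => hd; field; done.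
Qed.

Lemma inter_uniq (l m : line) (p q : point) : ~ par l m -> on l p -> on m p -> on l q -> on m q -> p = q.
Proof.
move=> /par_iff /eqP hd /onE a /onE b /onE c /onE d.
have e1 : det l m * (p.1 - q.1) = 0.
  rewrite -[RHS](_ : n2 m * (ev l p - ev l q) - n2 l * (ev m p - ev m q) = 0).
    by rewrite /ev /det; ring.
  by rewrite a b c d; ring.
have e2 : det l m * (p.2 - q.2) = 0.
  rewrite -[RHS](_ : n1 l * (ev m p - ev m q) - n1 m * (ev l p - ev l q) = 0).
    by rewrite /ev /det; ring.
  by rewrite a b c d; ring.
move: e1 e2 => /eqP; rewrite mulf_eq0 (negbTE hd) /= subr_eq0 => /eqP h1.
move=> /eqP; rewrite mulf_eq0 (negbTE hd) /= subr_eq0 => /eqP h2.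
exact: pteq.
Qed.

Lemma two_pts (L L' : line) (p q : point) : p <> q -> on L p -> on L q -> on L' p -> on L' q -> L = L'.
Proof.
move=> hne a b c d; case: (classic (par L L')) => h.
  exact: par_common a c.
by exfalso; apply: hne; apply: inter_uniq h a c b d.
Qed.

Lemma par_transfer (L C : line) (x y : point) : par L C -> on C x -> on C y -> on L x -> on L y.
Proof.
move=> h /onE a /onE b /onE c; apply/onE.
have := par_ev x h; have := par_ev y h; rewrite a b c add0r => e1 e2.
by move: e1; rewrite -e2 addr0.
Qed.

Lemma par_dir2 (L L' : line) (p q : point) : p <> q ->
  n1 L * (q.1 - p.1) + n2 L * (q.2 - p.2) = 0 ->
  n1 L' * (q.1 - p.1) + n2 L' * (q.2 - p.2) = 0 -> par L L'.
Proof.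
move=> hne a b; apply/par_iff; apply/eqP; apply: contraT => hd; exfalso; apply: hne.
have e1 : det L L' * (q.1 - p.1) = 0.
  rewrite -[RHS](_ : n2 L' * (n1 L * (q.1 - p.1) + n2 L * (q.2 - p.2)) - n2 L * (n1 L' * (q.1 - p.1) + n2 L' * (q.2 - p.2)) = 0).
    by rewrite /det; ring.
  by rewrite a b; ring.
have e2 : det L L' * (q.2 - p.2) = 0.
  rewrite -[RHS](_ : n1 L * (n1 L' * (q.1 - p.1) + n2 L' * (q.2 - p.2)) - n1 L' * (n1 L * (q.1 - p.1) + n2 L * (q.2 - p.2)) = 0).
    by rewrite /det; ring.
  by rewrite a b; ring.
move: e1 e2 => /eqP; rewrite mulf_eq0 (negbTE hd) /= subr_eq0 => /eqP h1.
move=> /eqP; rewrite mulf_eq0 (negbTE hd) /= subr_eq0 => /eqP h2.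
by apply: pteq.
Qed.

Lemma exists_line (p q : point) : exists L, on L p /\ on L q.
Proof.
case: (eqVneq p.1 q.1) => h.
  by exists (Line (DVert K) p.1); rewrite /on /=.
have hd : q.1 - p.1 != 0 by rewrite subr_eq0 eq_sym.
exists (Line (DSlope ((q.2 - p.2) / (q.1 - p.1))) (p.2 - (q.2 - p.2) / (q.1 - p.1) * p.1)).
by rewrite /on /=; split; field.
Qed.

Lemma ev_refl (L : line) (c p : point) : ev L (refl c p) = 2 * ev L c - ev L p.
Proof. rewrite /ev /refl /=; ring. Qed.
Lemma ev_mid (L : line) (p q : point) : ev L (midpt p q) = (ev L p + ev L q) / 2.
Proof. by rewrite /ev /midpt /=; field. Qed.
Lemma refl_on (L : line) (c p : point) : on L c -> on L p -> on L (refl c p).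
Proof. move=> /onE a /onE b; apply/onE; rewrite ev_refl a b; ring. Qed.
Lemma on_mid_refl (L : line) (c p : point) : on L p -> on L (refl c p) -> on L c.
Proof.
move=> /onE a /onE; rewrite ev_refl a subr0 => /eqP; rewrite mulf_eq0 (negbTE char2) /= => /eqP.
by move/onE.
Qed.
Lemma midpt_refl (c p : point) : midpt p (refl c p) = c.
Proof. by apply: pteq; rewrite /midpt /refl /=; field. Qed.
Lemma refl_invol (c p : point) : refl c (refl c p) = p.
Proof. apply: pteq; rewrite /refl /=; ring. Qed.
Lemma refl_inj (c p q : point) : refl c p = refl c q -> p = q.
Proof. by move=> e; rewrite -(refl_invol c p) e refl_invol. Qed.
Lemma refl_mid_eq (a b : point) : refl (midpt a b) a = b.
Proof. by apply: pteq; rewrite /refl /midpt /=; field. Qed.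

Lemma refl_par2 (N1 N2 : line) (M p : point) : par N1 N2 -> ev N1 M + ev N2 M = 0 -> on N1 p -> on N2 (refl M p).
Proof.
move=> h s /onE a; apply/onE; rewrite ev_refl !(par_ev _ h) a.
move: s; rewrite (par_ev M h) => s.
rewrite -[RHS](_ : (ev N1 M + (ev N1 M + (lcst N1 - lcst N2))) = 0) //; ring.
Qed.

Lemma refl_par (L L' : line) (c a p : point) : par L L' -> on L a -> on L' (refl c a) -> on L p -> on L' (refl c p).
Proof.
move=> h /onE ha /onE hra /onE hp; apply/onE.
move: hra; rewrite !ev_refl !(par_ev _ h) ha hp => e.
rewrite -[RHS]e; ring.
Qed.

Lemma refl_mid (l L1 L2 : line) (c p : point) : ~ par l L1 -> ~ par l L2 -> on l c -> on l p -> on L1 p ->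
  on L2 (refl c p) -> mid_is l L1 L2 (Aff c).
Proof.
move=> a b hc hp h1 h2; right; split => //; split => //.
exists p, (refl c p); split => //; first exact: refl_on.
by rewrite midpt_refl.
Qed.

Definition Gf (L1 L2 : line) (M : point) (l : line) := ev L1 M * det L2 l + ev L2 M * det L1 l.

Lemma mid_G (l L1 L2 : line) (M : point) : mid_is l L1 L2 (Aff M) ->
  [/\ ~ par l L1, ~ par l L2, on l M & Gf L1 L2 M l = 0].
Proof.
case=> [[_ hX]|[h1 [h2 [p [q [hlp h1p hlq h2q hX]]]]]]; first by [].
case: hX => ->; move: hlp hlq h1p h2q; rewrite !onE => hlp hlq h1p h2q.
split => //.
  by apply/onE; rewrite ev_mid hlp hlq; field.
rewrite /Gf.
have -> : ev L1 (midpt p q) * det L2 l + ev L2 (midpt p q) * det L1 l =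
   ev L1 p * det L2 l + ev L2 q * det L1 l - (ev l q - ev l p) * det L1 L2 / 2.
  by rewrite /ev /det /midpt /=; field.
by rewrite h1p h2q hlp hlq; ring.
Qed.

Lemma G_pair (l L1 L2 : line) (M : point) : (crosses l L1 L2 -> mid_is l L1 L2 (Aff M)) ->
  on l M -> Gf L1 L2 M l = 0.
Proof.
move=> H hM; case: (classic (crosses l L1 L2)) => hc.
  by case: (mid_G (H hc)).
rewrite /Gf.
case: (classic (l = L1)) => [e|n1].
  by subst; move/onE: hM => ->; rewrite det_self; ring.
case: (classic (l = L2)) => [e|n2].
  by subst; move/onE: hM => ->; rewrite det_self; ring.
case: (classic (par l L1 /\ par l L2)) => [[p1 p2]|np]; last by exfalso; apply: hc; split.
move/par_sym/par_iff: p1 => ->; move/par_sym/par_iff: p2 => ->; ring.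
Qed.

Lemma bis_aff (l L1 L2 N1 N2 : line) X : ~ par L1 N1 -> ~ par L1 N2 -> ~ par L2 N1 -> ~ par L2 N2 ->
  crosses l L1 L2 -> mid_is l L1 L2 X -> (crosses l N1 N2 -> mid_is l N1 N2 X) ->
  exists M, X = Aff M.
Proof.
move=> a b c d hc [[hp hX]|[_ [_ [p [q [_ _ _ _ hX]]]]]] H; last by exists (midpt p q).
have [hN1 hN2] : ~ par l N1 /\ ~ par l N2.
  by case: hp => hp; split => h; [apply: a|apply: b|apply: c|apply: d]; exact: par_trans (par_sym hp) h.
have hcN : crosses l N1 N2.
  split; [exact: npar_neq | exact: npar_neq | by case].
case: (H hcN) => [[[h|h] _]|[_ [_ [p [q [_ _ _ _ hX']]]]]]; [by []|by []|].
by rewrite hX in hX'.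
Qed.

Lemma bis_G (A B A' B' l : line) X : is_quad (Quad A B A' B') ->
  bisector_mid (Quad A B A' B') l X ->
  exists M, [/\ X = Aff M, on l M, Gf A A' M l = 0 & Gf B B' M l = 0].
Proof.
case=> _ _ [pAB pBA' pA'B' pB'A] [hc [hA hB]] /=.
simpl in hc, hA, hB.
have [M hX] : exists M, X = Aff M.
  case: hc => hc.
    apply: (bis_aff _ _ _ _ hc (hA hc) hB) => //; [exact: npar_sym|exact: npar_sym].
  apply: (bis_aff _ _ _ _ hc (hB hc) hA) => //; [exact: npar_sym|exact: npar_sym].
subst X.
have hM : on l M.
  by case: hc => hc; [case: (mid_G (hA hc))|case: (mid_G (hB hc))].
exists M; split => //; exact: G_pair.
Qed.

Lemma lin2 (x y : K) (l1 l2 : line) : x * n2 l1 - y * n1 l1 = 0 -> x * n2 l2 - y * n1 l2 = 0 ->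
  det l1 l2 != 0 -> x = 0 /\ y = 0.
Proof.
move=> e1 e2 hd.
have h1 : x * det l1 l2 = 0.
  rewrite -[RHS](_ : n1 l1 * (x * n2 l2 - y * n1 l2) - n1 l2 * (x * n2 l1 - y * n1 l1) = 0).
    by rewrite /det; ring.
  by rewrite e1 e2; ring.
have h2 : y * det l1 l2 = 0.
  rewrite -[RHS](_ : n2 l1 * (x * n2 l2 - y * n1 l2) - n2 l2 * (x * n2 l1 - y * n1 l1) = 0).
    by rewrite /det; ring.
  by rewrite e1 e2; ring.
move/eqP: h1; rewrite mulf_eq0 (negbTE hd) orbF => /eqP ->.
by move/eqP: h2; rewrite mulf_eq0 (negbTE hd) orbF => /eqP ->.
Qed.

Lemma Zpair (L1 L2 : line) (M : point) (l1 l2 : line) : Gf L1 L2 M l1 = 0 -> Gf L1 L2 M l2 = 0 ->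
  det l1 l2 != 0 ->
  (~ par L1 L2 /\ on L1 M /\ on L2 M) \/ (par L1 L2 /\ ev L1 M + ev L2 M = 0).
Proof.
move=> g1 g2 hd.
have [x0 y0] : ev L1 M * n1 L2 + ev L2 M * n1 L1 = 0 /\ ev L1 M * n2 L2 + ev L2 M * n2 L1 = 0.
  apply: (@lin2 _ _ l1 l2 _ _ hd).
  - by rewrite -[RHS]g1 /Gf /det; ring.
  - by rewrite -[RHS]g2 /Gf /det; ring.
case: (eqVneq (det L1 L2) 0) => h.
  right; have hp : par L1 L2 by apply/par_iff.
  split => //; have [e1 e2] := nrm_par hp.
  apply: (@nrm_nz L1); [rewrite -[RHS]x0 e1|rewrite -[RHS]y0 e2]; ring.
left; split; first by move/par_iff => h'; rewrite h' eqxx in h.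
split; apply/onE.
  have : ev L1 M * det L1 L2 = 0.
    rewrite -[RHS](_ : n1 L1 * (ev L1 M * n2 L2 + ev L2 M * n2 L1) - n2 L1 * (ev L1 M * n1 L2 + ev L2 M * n1 L1) = 0).
      by rewrite /det; ring.
    by rewrite x0 y0; ring.
  by move/eqP; rewrite mulf_eq0 (negbTE h) orbF => /eqP.
have : ev L2 M * det L1 L2 = 0.
  rewrite -[RHS](_ : n2 L2 * (ev L1 M * n1 L2 + ev L2 M * n1 L1) - n1 L2 * (ev L1 M * n2 L2 + ev L2 M * n2 L1) = 0).
    by rewrite /det; ring.
  by rewrite x0 y0; ring.
by move/eqP; rewrite mulf_eq0 (negbTE h) orbF => /eqP.
Qed.

Lemma vert_char (A B A' B' : line) (v1 v2 v3 v4 x : point) :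
  ~ par A B -> ~ par B A' -> ~ par A' B' -> ~ par B' A ->
  on A v1 -> on B v1 -> on B v2 -> on A' v2 -> on A' v3 -> on B' v3 -> on B' v4 -> on A v4 ->
  is_vertex (Quad A B A' B') x <-> (x = v1 \/ x = v2 \/ x = v3 \/ x = v4).
Proof.
move=> p1 p2 p3 p4 a1 b1 b2 a2 a3 b3 b4 a4; split.
  case=> [[a b]|[[a b]|[[a b]|[a b]]]].
  - by left; apply: inter_uniq p1 a b a1 b1.
  - by right; left; apply: inter_uniq p2 a b b2 a2.
  - by right; right; left; apply: inter_uniq p3 a b a3 b3.
  - by right; right; right; apply: inter_uniq p4 a b b4 a4.
case=> [->|[->|[->|->]]]; rewrite /is_vertex; tauto.
Qed.


Lemma dir_ev (L : line) (p q : point) : n1 L * (q.1 - p.1) + n2 L * (q.2 - p.2) = ev L q - ev L p.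
Proof. rewrite /ev; ring. Qed.

Lemma sym_cfg (L1 N1 L2 N2 : line) (M : point) :
  ~ par L1 L2 -> on L1 M -> on L2 M -> par N1 N2 -> N1 <> N2 -> ev N1 M + ev N2 M = 0 ->
  ~ par L1 N1 -> ~ par N1 L2 -> ~ par L2 N2 -> ~ par N2 L1 ->
  exists v1 v2 v3 v4, [/\ on L1 v1 /\ on N1 v1, on N1 v2 /\ on L2 v2, on L2 v3 /\ on N2 v3,
     on N2 v4 /\ on L1 v4 & M = midpt (midpt v1 v3) (midpt v2 v4)] /\
  exists P, is_parallelogram P /\ forall x, is_vertex P x <-> (x = v1 \/ x = v2 \/ x = v3 \/ x = v4).
Proof.
move=> pL h1M h2M pN nN sN p1 p2 p3 p4.
have [v1 [h11 h1N]] := inter p1.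
have [v2 [h2N h22]] := inter p2.
have h4L : on L1 (refl M v1) by apply: refl_on.
have h4N : on N2 (refl M v1) by apply: refl_par2 pN sN h1N.
have h3L : on L2 (refl M v2) by apply: refl_on.
have h3N : on N2 (refl M v2) by apply: refl_par2 pN sN h2N.
set v3 := refl M v2 in h3L h3N *; set v4 := refl M v1 in h4L h4N *.
exists v1, v2, v3, v4; split.
  by split => //; apply: pteq; rewrite /v3 /v4 /midpt /refl /=; field.
have n24 : v2 <> v4 by move=> e; rewrite e in h2N; apply: par_disj pN nN h2N h4N.
have n13 : v1 <> v3 by move=> e; rewrite e in h1N; apply: par_disj pN nN h1N h3N.
have n12 : v1 <> v2.
  move=> e; rewrite -e in h22.
  have eM := inter_uniq pL h11 h22 h1M h2M.
  rewrite eM in h1N; move/onE: (h1N) => e1; rewrite e1 add0r in sN.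
  by apply: par_disj pN nN h1N (proj2 (onE _ _) sN).
have [C [hC2 hC4]] := exists_line v2 v4.
have [C' [hC'3 hC'1]] := exists_line v3 v1.
have q1 : ~ par N1 C.
  move=> h; have := par_transfer h hC2 hC4 h2N => h'; exact: par_disj pN nN h' h4N.
have q2 : ~ par C N2.
  move=> h; have := par_transfer (par_sym h) hC4 hC2 h4N => h'; exact: par_disj pN nN h2N h'.
have q3 : ~ par N2 C'.
  move=> h; have := par_transfer h hC'3 hC'1 h3N => h'; exact: par_disj pN nN h1N h'.
have q4 : ~ par C' N1.
  move=> h; have := par_transfer (par_sym h) hC'1 hC'3 h1N => h'; exact: par_disj pN nN h' h3N.
have pC : par C C'.
  apply: (par_dir2 n24).
    by rewrite dir_ev; move/onE: hC2 => ->; move/onE: hC4 => ->; rewrite subrr.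
  rewrite -[RHS](_ : ev C' v3 - ev C' v1 = 0); last by move/onE: hC'3 => ->; move/onE: hC'1 => ->; rewrite subrr.
  by rewrite /v3 /v4 /ev /refl /=; ring.
have nC : C <> C'.
  move=> e; rewrite -e in hC'1.
  have eN := two_pts n12 h1N h2N hC'1 hC2.
  by apply: q1; rewrite eN.
exists (Quad N1 C N2 C'); split.
  split; last by split.
  split.
  - split; [exact: npar_neq| exact: nN| | exact: npar_neq|split => //].
      by apply: npar_neq; apply: npar_sym.
    by apply: npar_neq.
  - by case=> p [a _ b _]; apply: par_disj pN nN a b.
  - by split.
move=> x; rewrite (vert_char x q1 q2 q3 q4 h2N hC2 hC4 h4N h3N hC'3 hC'1 h1N); tauto.
Qed.

Lemma par_cfg (A B A' B' : line) (M : point) : is_quad (Quad A B A' B') -> par A A' -> par B B' ->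
  ev A M + ev A' M = 0 -> ev B M + ev B' M = 0 ->
  centroid (Quad A B A' B') M /\ vertices_of_parallelogram (Quad A B A' B').
Proof.
move=> hQ pA pB sA sB; split; last by exists (Quad A B A' B'); split => //; split.
case: (hQ) => _ _ [pAB pBA' pA'B' pB'A].
have [v1 [hA1 hB1]] := inter pAB.
have [v2 [hB2 hA'2]] := inter pBA'.
exists v1, v2, (refl M v1), (refl M v2); split.
- by [].
- by [].
- by split; [apply: refl_par2 pA sA hA1|apply: refl_par2 pB sB hB1].
- split; first by apply: refl_par2 pB sB hB2.
  by apply: (refl_par2 (par_sym pA)) hA'2; rewrite addrC.
- by rewrite !midpt_refl /midpt; apply: pteq => /=; field.
Qed.

Lemma fwd (A B A' B' l1 l2 : line) X : is_quad (Quad A B A' B') -> l1 <> l2 ->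
  bisector_mid (Quad A B A' B') l1 X -> bisector_mid (Quad A B A' B') l2 X ->
  exists M, [/\ X = Aff M, centroid (Quad A B A' B') M & vertices_of_parallelogram (Quad A B A' B')].
Proof.
move=> hQ hne b1 b2.
have [M [hX h1M gA1 gB1]] := bis_G hQ b1.
have [M' [hX' h2M gA2 gB2]] := bis_G hQ b2.
subst X; case: hX' => hMM; subst M'.
have hdet : det l1 l2 != 0.
  by apply/eqP => /par_iff hp; apply: hne; apply: par_common hp h1M h2M.
have zA := Zpair gA1 gA2 hdet; have zB := Zpair gB1 gB2 hdet.
exists M; split => //.
  case: (hQ) => [[nAB nAA' nAB' nBA' [nBB' nA'B']] hconc [pAB pBA' pA'B' pB'A]].
  case: zA => [[pA [hAM hA'M]]|[pA sA]]; case: zB => [[pB [hBM hB'M]]|[pB sB]].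
  - by exfalso; apply: hconc; exists M; split.
  - have [v1 [v2 [v3 [v4 [[[a1 b1'] [b2' a2] [a3 b3] [b4 a4] eM] _]]]]] :=
      sym_cfg pA hAM hA'M pB nBB' sB pAB pBA' pA'B' pB'A.
    by exists v1, v2, v3, v4.
  - have [v1 [v2 [v3 [v4 [[[a1 b1'] [b2' a2] [a3 b3] [b4 a4] eM] _]]]]] :=
      sym_cfg pB hBM hB'M (par_sym pA) (nesym nAA') (etrans (addrC _ _) sA)
        pBA' pA'B' pB'A pAB.
    exists v4, v1, v2, v3; split => //.
    by rewrite eM /midpt; apply: pteq => /=; field.
  - by case: (par_cfg hQ pA pB sA sB).
  case: (hQ) => [[nAB nAA' nAB' nBA' [nBB' nA'B']] hconc [pAB pBA' pA'B' pB'A]].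
  case: zA => [[pA [hAM hA'M]]|[pA sA]]; case: zB => [[pB [hBM hB'M]]|[pB sB]].
  - by exfalso; apply: hconc; exists M; split.
  - have [v1 [v2 [v3 [v4 [[[a1 b1'] [b2' a2] [a3 b3] [b4 a4] eM] [P [hP hV]]]]]]] :=
      sym_cfg pA hAM hA'M pB nBB' sB pAB pBA' pA'B' pB'A.
    exists P; split => // x; rewrite hV.
    exact: vert_char pAB pBA' pA'B' pB'A a1 b1' b2' a2 a3 b3 b4 a4.
  - have [v1 [v2 [v3 [v4 [[[a1 b1'] [b2' a2] [a3 b3] [b4 a4] eM] [P [hP hV]]]]]]] :=
      sym_cfg pB hBM hB'M (par_sym pA) (nesym nAA') (etrans (addrC _ _) sA)
        pBA' pA'B' pB'A pAB.
    exists P; split => // x; rewrite hV.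
    rewrite (vert_char x pAB pBA' pA'B' pB'A b4 a4 a1 b1' b2' a2 a3 b3); tauto.
  - by case: (par_cfg hQ pA pB sA sB).
Qed.


Lemma pig3 (T : Type) (a b c w1 w2 w3 w4 : T) :
  w1 <> w2 -> w1 <> w3 -> w1 <> w4 -> w2 <> w3 -> w2 <> w4 -> w3 <> w4 ->
  (w1 = a \/ w1 = b \/ w1 = c) -> (w2 = a \/ w2 = b \/ w2 = c) ->
  (w3 = a \/ w3 = b \/ w3 = c) -> (w4 = a \/ w4 = b \/ w4 = c) -> False.
Proof.
move=> d1 d2 d3 d4 d5 d6 h1 h2 h3 h4.
case: h1 => [e1|[e1|e1]]; case: h2 => [e2|[e2|e2]]; case: h3 => [e3|[e3|e3]];
case: h4 => [e4|[e4|e4]]; congruence.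
Qed.

Lemma pig4 (T : Type) (v1 v2 v3 v4 w1 w2 w3 w4 : T) :
  w1 <> w2 -> w1 <> w3 -> w1 <> w4 -> w2 <> w3 -> w2 <> w4 -> w3 <> w4 ->
  (w1 = v1 \/ w1 = v2 \/ w1 = v3 \/ w1 = v4) ->
  (w2 = v1 \/ w2 = v2 \/ w2 = v3 \/ w2 = v4) ->
  (w3 = v1 \/ w3 = v2 \/ w3 = v3 \/ w3 = v4) ->
  (w4 = v1 \/ w4 = v2 \/ w4 = v3 \/ w4 = v4) ->
  v1 <> v2 /\ v1 <> v3 /\ v1 <> v4 /\ v2 <> v3 /\ v2 <> v4 /\ v3 <> v4.
Proof.
move=> d1 d2 d3 d4 d5 d6 h1 h2 h3 h4.
repeat split; move=> e; subst.
- by apply: (pig3 (a:=v2) (b:=v3) (c:=v4) d1 d2 d3 d4 d5 d6); tauto.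
- by apply: (pig3 (a:=v2) (b:=v3) (c:=v4) d1 d2 d3 d4 d5 d6); tauto.
- by apply: (pig3 (a:=v2) (b:=v3) (c:=v4) d1 d2 d3 d4 d5 d6); tauto.
- by apply: (pig3 (a:=v1) (b:=v3) (c:=v4) d1 d2 d3 d4 d5 d6); tauto.
- by apply: (pig3 (a:=v1) (b:=v3) (c:=v4) d1 d2 d3 d4 d5 d6); tauto.
- by apply: (pig3 (a:=v1) (b:=v2) (c:=v4) d1 d2 d3 d4 d5 d6); tauto.
Qed.

Lemma on_midline (L L' : line) (p q : point) : par L L' -> on L p -> on L' q ->
  on (Line (ldir L) ((lcst L + lcst L') / 2)) (midpt p q).
Proof.
move=> h /onE a /onE b; apply/onE.
have [e1 e2] := nrm_par h.
have f1 : n1 (Line (ldir L) ((lcst L + lcst L') / 2)) = n1 L by [].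
have f2 : n2 (Line (ldir L) ((lcst L + lcst L') / 2)) = n2 L by [].
rewrite -[RHS](_ : (ev L p + ev L' q) / 2 = 0); last by rewrite a b; ring.
by rewrite /ev f1 f2 -e1 -e2 /midpt /=; field.
Qed.

Lemma case_b (A B A' B' : line) (c v1 v2 v3 v4 : point) : is_quad (Quad A B A' B') ->
  on A v1 -> on B v1 -> on B v2 -> on A' v2 -> on A' v3 -> on B' v3 -> on B' v4 -> on A v4 ->
  refl c v1 = v2 -> refl c v3 = v4 ->
  exists l1 l2 X, [/\ l1 <> l2, bisector_mid (Quad A B A' B') l1 X & bisector_mid (Quad A B A' B') l2 X].
Proof.
move=> hQ; case: (hQ) => [[nAB nAA' nAB' nBA' [nBB' nA'B']] _ [pAB pBA' pA'B' pB'A]].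
move=> a1 b1 b2 a2 a3 b3 b4 a4 e12 e34.
have hcB : on B c by apply: (on_mid_refl b1); rewrite e12.
have hcB' : on B' c by apply: (on_mid_refl b3); rewrite e34.
exists B, B', (Aff c); split => //.
- split; first by left; split => //; [exact: nesym nAB| case => h _; exact: pAB (par_sym h)].
  split; last by case.
  by move=> _; apply: refl_mid (npar_sym pAB) pBA' hcB b1 a1 _; rewrite e12.
- split.
    by left; split => //; [exact: nesym nAB'| exact: nesym nA'B'| case => h _; exact: pB'A h].
  split; last by case.
  move=> _; apply: refl_mid pB'A (npar_sym pA'B') hcB' b4 a4 _.
  by rewrite -e34 refl_invol.
Qed.

Lemma case_c (A B A' B' : line) (c v1 v2 v3 v4 : point) : is_quad (Quad A B A' B') ->
  on A v1 -> on B v1 -> on B v2 -> on A' v2 -> on A' v3 -> on B' v3 -> on B' v4 -> on A v4 ->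
  refl c v1 = v4 -> refl c v2 = v3 ->
  exists l1 l2 X, [/\ l1 <> l2, bisector_mid (Quad A B A' B') l1 X & bisector_mid (Quad A B A' B') l2 X].
Proof.
move=> hQ; case: (hQ) => [[nAB nAA' nAB' nBA' [nBB' nA'B']] _ [pAB pBA' pA'B' pB'A]].
move=> a1 b1 b2 a2 a3 b3 b4 a4 e14 e23.
have hcA : on A c by apply: (on_mid_refl a1); rewrite e14.
have hcA' : on A' c by apply: (on_mid_refl a2); rewrite e23.
exists A, A', (Aff c); split => //.
- split; first by right; split => //; case => h _.
  split; first by case.
  by move=> _; apply: refl_mid pAB (npar_sym pB'A) hcA a1 b1 _; rewrite e14.
- split.
    by right; split => //; [exact: nesym nBA'| case => h _; exact: pBA' (par_sym h)].
  split; first by case.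
  move=> _; apply: refl_mid (npar_sym pBA') pA'B' hcA' a2 b2 _.
  by rewrite e23.
Qed.

Lemma case_a (A B A' B' : line) (c v1 v2 v3 v4 : point) : is_quad (Quad A B A' B') ->
  on A v1 -> on B v1 -> on B v2 -> on A' v2 -> on A' v3 -> on B' v3 -> on B' v4 -> on A v4 ->
  refl c v1 = v3 -> refl c v2 = v4 -> v1 <> v4 -> v1 <> v2 ->
  exists l1 l2 X, [/\ l1 <> l2, bisector_mid (Quad A B A' B') l1 X & bisector_mid (Quad A B A' B') l2 X].
Proof.
move=> hQ; case: (hQ) => [[nAB nAA' nAB' nBA' [nBB' nA'B']] _ [pAB pBA' pA'B' pB'A]].
move=> a1 b1 b2 a2 a3 b3 b4 a4 e13 e24 n14 n12.
have pA : par A A'.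
  apply: (par_dir2 n14).
    by rewrite dir_ev; move/onE: a1 => ->; move/onE: a4 => ->; rewrite subrr.
  rewrite -[RHS](_ : ev A' v3 - ev A' v2 = 0); last by move/onE: a3 => ->; move/onE: a2 => ->; rewrite subrr.
  by rewrite -e13 -e24 /ev /refl /=; ring.
have pB : par B B'.
  apply: (par_dir2 n12).
    by rewrite dir_ev; move/onE: b1 => ->; move/onE: b2 => ->; rewrite subrr.
  rewrite -[RHS](_ : ev B' v3 - ev B' v4 = 0); last by move/onE: b3 => ->; move/onE: b4 => ->; rewrite subrr.
  by rewrite -e13 -e24 /ev /refl /=; ring.
have ec : c = midpt v1 v3 by rewrite -e13 midpt_refl.
set mA := Line (ldir A) ((lcst A + lcst A') / 2).
set mB := Line (ldir B) ((lcst B + lcst B') / 2).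
have hcA : on mA c by rewrite ec; apply: on_midline.
have hcB : on mB c by rewrite ec; apply: on_midline.
have m1 : ~ par mA B by move=> h; apply: pAB; exact: h.
have m2 : ~ par mA B' by move=> h; apply: (npar_sym pB'A); exact: h.
have m3 : ~ par mB A by move=> h; apply: (npar_sym pAB); exact: h.
have m4 : ~ par mB A' by move=> h; apply: pBA'; exact: h.
exists mA, mB, (Aff c); split.
- by apply: npar_neq => h; apply: pAB; exact: h.
- split; first by right; split; [exact: npar_neq|exact: npar_neq| case => h _; exact: m1 h].
  split; first by case => _ _ []; split => //; exact: pA.
  move=> _; have [p [hp1 hp2]] := inter m1.
  apply: (refl_mid m1 m2 hcA hp1 hp2).
  by apply: (refl_par pB b1) hp2; rewrite e13.
- split; first by left; split; [exact: npar_neq|exact: npar_neq| case => h _; exact: m3 h].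
  split; last by case => _ _ []; split => //; exact: pB.
  move=> _; have [p [hp1 hp2]] := inter m3.
  apply: (refl_mid m3 m4 hcB hp1 hp2).
  by apply: (refl_par pA a1) hp2; rewrite e13.
Qed.


Lemma bwd (A B A' B' : line) : is_quad (Quad A B A' B') -> vertices_of_parallelogram (Quad A B A' B') ->
  exists l1 l2 X, [/\ l1 <> l2, bisector_mid (Quad A B A' B') l1 X & bisector_mid (Quad A B A' B') l2 X].
Proof.
move=> hQ [[A0 B0 A0' B0'] [[hP [pA0 pB0]] hV]].
case: (hP) => [[_ nA0 _ _ [nB0 _]] _ [q1 q2 q3 q4]].
have [w1 [a01 b01]] := inter q1.
have [w2 [b02 a02]] := inter q2.
have [w3 [a03 b03]] := inter q3.
have [w4 [b04 a04]] := inter q4.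
case: (hQ) => _ _ [p1 p2 p3 p4].
have [v1 [a1 b1]] := inter p1.
have [v2 [b2 a2]] := inter p2.
have [v3 [a3 b3]] := inter p3.
have [v4 [b4 a4]] := inter p4.
have hVW : forall x, (x = v1 \/ x = v2 \/ x = v3 \/ x = v4) <-> (x = w1 \/ x = w2 \/ x = w3 \/ x = w4).
  move=> x; rewrite -(vert_char x p1 p2 p3 p4 a1 b1 b2 a2 a3 b3 b4 a4).
  rewrite -(vert_char x q1 q2 q3 q4 a01 b01 b02 a02 a03 b03 b04 a04).
  exact: hV.
set c := midpt w1 w3.
have e13 : refl c w1 = w3 by apply: refl_mid_eq.
have e31 : refl c w3 = w1 by rewrite -e13 refl_invol.
have e24 : refl c w2 = w4.
  apply: (inter_uniq q4) b04 a04.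
    by apply: (refl_par pB0 b01) b02; rewrite e13.
  by apply: (refl_par (par_sym pA0) a03) a02; rewrite e31.
have e42 : refl c w4 = w2 by rewrite -e24 refl_invol.
have d12 : w1 <> w2 by move=> e; rewrite e in a01; apply: par_disj pA0 nA0 a01 a02.
have d13 : w1 <> w3 by move=> e; rewrite e in a01; apply: par_disj pA0 nA0 a01 a03.
have d14 : w1 <> w4 by move=> e; rewrite e in b01; apply: par_disj pB0 nB0 b01 b04.
have d23 : w2 <> w3 by move=> e; rewrite e in b02; apply: par_disj pB0 nB0 b02 b03.
have d24 : w2 <> w4 by move=> e; rewrite e in a02; apply: par_disj pA0 nA0 a04 a02.
have d34 : w3 <> w4 by move=> e; rewrite e in a03; apply: par_disj pA0 nA0 a04 a03.
have hR : forall x, (x = w1 \/ x = w2 \/ x = w3 \/ x = w4) ->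
    (refl c x = w1 \/ refl c x = w2 \/ refl c x = w3 \/ refl c x = w4) /\ refl c x <> x.
  move=> x [->|[->|[->|->]]]; [rewrite e13|rewrite e24|rewrite e31|rewrite e42]; split; try tauto; congruence.
have hRv : forall x, (x = v1 \/ x = v2 \/ x = v3 \/ x = v4) ->
    (refl c x = v1 \/ refl c x = v2 \/ refl c x = v3 \/ refl c x = v4) /\ refl c x <> x.
  move=> x /hVW /hR [h1 h2]; split => //; exact/hVW.
have [n12 [n13 [n14 [n23 [n24 n34]]]]] : v1 <> v2 /\ v1 <> v3 /\ v1 <> v4 /\ v2 <> v3 /\ v2 <> v4 /\ v3 <> v4.
  apply: (pig4 d12 d13 d14 d23 d24 d34); apply/hVW; tauto.
have [hr1 hn1] := hRv v1 (or_introl erefl).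
have [hr2 hn2] := hRv v2 (or_intror (or_introl erefl)).
have [hr3 hn3] := hRv v3 (or_intror (or_intror (or_introl erefl))).
case: hr1 => [e|[e|[e|e]]]; first by [].
-
  case: hr3 => [f|[f|[f|f]]].
  + by exfalso; apply: n23; rewrite -e -f refl_invol.
  + by exfalso; apply: n13; apply: (refl_inj (c:=c)); rewrite e f.
  + by [].
  + exact: (case_b hQ a1 b1 b2 a2 a3 b3 b4 a4 e f).
-
  case: hr2 => [f|[f|[f|f]]].
  + by exfalso; apply: n23; rewrite -e -f refl_invol.
  + by [].
  + by exfalso; apply: n12; apply: (refl_inj (c:=c)); rewrite e f.
  + exact: (case_a hQ a1 b1 b2 a2 a3 b3 b4 a4 e f n14 n12).
-
  case: hr2 => [f|[f|[f|f]]].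
  + by exfalso; apply: n24; rewrite -e -f refl_invol.
  + by [].
  + exact: (case_c hQ a1 b1 b2 a2 a3 b3 b4 a4 e f).
  + by exfalso; apply: n12; apply: (refl_inj (c:=c)); rewrite e f.
Qed.

End L.

Unset Implicit Arguments.

Theorem proposition3p5 (K : fieldType) (char2 : (2 : K) != 0)
    (Q : quad K) (hQ : is_quad Q) :
  ((exists (l1 l2 : line K) (X : ppoint K),
       [/\ l1 <> l2, bisector_mid Q l1 X & bisector_mid Q l2 X])
     <-> vertices_of_parallelogram Q) /\
  (forall (l1 l2 : line K) (X : ppoint K),
     l1 <> l2 -> bisector_mid Q l1 X -> bisector_mid Q l2 X ->
     exists c, centroid Q c /\ X = Aff c).
Proof.
case: Q hQ => A B A' B' hQ; split; first split.
- move=> [l1 [l2 [X [hne b1 b2]]]].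
  by have [M [_ _ hv]] := fwd char2 hQ hne b1 b2.
- by move=> h; exact: (@bwd K char2 A B A' B' hQ h).
- move=> l1 l2 X hne b1 b2.
  have [M [hX hc _]] := fwd char2 hQ hne b1 b2.
  by exists M.
Qed.
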